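(* Let $u_1,\dots,u_m\in\mathbf{B}^d\subset\mathbb{R}^d$ and positive weights $c_1,\dots,c_m$ form a John decomposition of the identity for functions. Then $\sum_{i=1}^m c_i=d+1$ and the convex hull of $u_1,\dots,u_m$ contains the ball $\frac{1}{d+1}\mathbf{B}^d$.
   Context: $\mathbf{B}^d$ is the closed Euclidean unit ball in $\mathbb{R}^d$. The height function is $\hbar(x)=\sqrt{1-|x|^2}$ for $x\in\mathbf{B}^d$ and $0$ otherwise. Points $u_1,\dots,u_m\in\mathbf{B}^d$ and positive weights $c_1,\dots,c_m$ form a John decomposition of the identity for functions if (1) $\sum_i c_i\, u_i\otimes u_i=\mathrm{Id}_d$ (where $u\otimes u$ is the map $x\mapsto\langle u,x\rangle u$), (2) $\sum_i c_i\,\hbar(u_i)^2=1$, and (3) $\sum_i c_i u_i=0$. *)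

(* Defs.v *)
(* R an arbitrary real closed field (covers the reals). *)
From HB Require Import structures.
From mathcomp Require Import all_boot all_order all_algebra.
Set Implicit Arguments. Unset Strict Implicit. Unset Printing Implicit Defensive.
Import Order.TTheory GRing.Theory Num.Theory.
Local Open Scope ring_scope.

Definition dotv (R : rcfType) (d : nat) (x y : 'rV[R]_d) : R := (x *m y^T) 0 0.
Definition enorm (R : rcfType) (d : nat) (x : 'rV[R]_d) : R := Num.sqrt (dotv x x).

(* closed Euclidean ball of radius r centred at 0; B^d = ball 1 *)
Definition cball (R : rcfType) (d : nat) (r : R) : 'rV[R]_d -> Prop :=
  fun x => enorm x <= r.

Definition hbar (R : rcfType) (d : nat) (x : 'rV[R]_d) : R :=
  if enorm x <= 1 then Num.sqrt (1 - enorm x ^+ 2) else 0.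

(* u ⊗ u : the matrix of x |-> <u,x> u  (symmetric, so same in row convention) *)
Definition tensor (R : rcfType) (d : nat) (u : 'rV[R]_d) : 'M[R]_d := u^T *m u.

Definition john_decomposition (R : rcfType) (d m : nat)
  (u : 'I_m -> 'rV[R]_d) (c : 'I_m -> R) : Prop :=
  (forall i, cball 1 (u i)) /\ (forall i, 0 < c i) /\
  \sum_(i < m) c i *: tensor (u i) = 1%:M /\
  \sum_(i < m) c i * hbar (u i) ^+ 2 = 1 /\
  \sum_(i < m) c i *: u i = 0.

Definition conv_hull (R : rcfType) (d m : nat) (u : 'I_m -> 'rV[R]_d)
  : 'rV[R]_d -> Prop :=
  fun x => exists lam : 'I_m -> R,
    (forall i, 0 <= lam i) /\ \sum_(i < m) lam i = 1 /\
    x = \sum_(i < m) lam i *: u i.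

(* Main.v *)
Require Import Defs.
From HB Require Import structures.
From mathcomp Require Import all_boot all_order all_algebra.
From mathcomp Require Import lra.
Import Order.TTheory GRing.Theory Num.Theory.
Local Open Scope ring_scope.

Section H.
Context {R : rcfType} {d : nat}.
Implicit Types x y : 'rV[R]_d.

Lemma dotvE x y : dotv x y = \sum_j x 0 j * y 0 j.
Proof. by rewrite /dotv mxE; apply: eq_bigr => j _; rewrite mxE. Qed.

Lemma dotvC x y : dotv x y = dotv y x.
Proof. by rewrite !dotvE; apply: eq_bigr => j _; rewrite mulrC. Qed.

Lemma dotv_ge0 x : 0 <= dotv x x.
Proof. by rewrite dotvE; apply: sumr_ge0 => j _; rewrite -expr2 sqr_ge0. Qed.

Lemma dotvDl x y z : dotv (x + y) z = dotv x z + dotv y z.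
Proof. by rewrite !dotvE -big_split; apply: eq_bigr => j _; rewrite !mxE mulrDl. Qed.

Lemma dotvZl a x y : dotv (a *: x) y = a * dotv x y.
Proof. by rewrite !dotvE mulr_sumr; apply: eq_bigr => j _; rewrite !mxE mulrA. Qed.

Lemma dotv_suml m (f : 'I_m -> 'rV[R]_d) y :
  dotv (\sum_i f i) y = \sum_i dotv (f i) y.
Proof. by rewrite /dotv mulmx_suml summxE. Qed.

Lemma dotv0l y : dotv (0 : 'rV[R]_d) y = 0.
Proof. by rewrite dotvE big1 // => j _; rewrite mxE mul0r. Qed.

Lemma enorm_sq x : enorm x ^+ 2 = dotv x x.
Proof. by rewrite /enorm sqr_sqrtr // dotv_ge0. Qed.

Lemma enorm_ge0 x : 0 <= enorm x.
Proof. exact: sqrtr_ge0. Qed.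

Lemma tensor_mul y (u : 'rV[R]_d) : y *m tensor u = dotv y u *: u.
Proof. by rewrite /tensor mulmxA [y *m u^T]mx11_scalar mul_scalar_mx. Qed.

Lemma tr_tensor (u : 'rV[R]_d) : \tr (tensor u) = dotv u u.
Proof. by rewrite /tensor mxtrace_mulC trace_mx11. Qed.

Lemma hbar_sq (u : 'rV[R]_d) : cball 1 u -> hbar u ^+ 2 = 1 - dotv u u.
Proof.
rewrite /cball /hbar => H; rewrite H sqr_sqrtr ?enorm_sq //.
have := enorm_ge0 u; rewrite -enorm_sq; nra.
Qed.

End H.

Theorem corollary4p3 (R : rcfType) (d m : nat)
  (u : 'I_m -> 'rV[R]_d) (c : 'I_m -> R) :
  john_decomposition u c ->
  \sum_(i < m) c i = d.+1%:R /\
  (forall x : 'rV[R]_d, cball (d.+1%:R)^-1 x -> conv_hull u x).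
Proof.
move=> [hB [hc [hT [hH h0]]]].
have Htr : \sum_i c i * dotv (u i) (u i) = d%:R.
  have := congr1 mxtrace hT; rewrite mxtrace_scalar linear_sum /= => <-.
  by apply: eq_bigr => i _; rewrite linearZ /= tr_tensor.
have Hsum : \sum_(i < m) c i = d.+1%:R.
  have -> : \sum_(i < m) c i = \sum_i c i * hbar (u i) ^+ 2 + \sum_i c i * dotv (u i) (u i).
    rewrite -big_split; apply: eq_bigr => i _ /=.
    by rewrite hbar_sq // -mulrDr subrK mulr1.
  by rewrite hH Htr -natr1 addrC.
split => // x Hx.
set k : R := d.+1%:R.
have kgt0 : 0 < k by rewrite ltr0n.
set y := k *: x.
have Hyy : dotv y y <= 1.
  rewrite /y dotvZl dotvC dotvZl -enorm_sq.
  move: Hx; rewrite /cball => Hx.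
  have e0 := enorm_ge0 x.
  have h1 : k * enorm x <= 1 by rewrite -(mulfV (lt0r_neq0 kgt0)) ler_wpM2l // ltW.
  have h2 : 0 <= k * enorm x by rewrite mulr_ge0 // ltW.
  have h3 : (k * enorm x) * (k * enorm x) <= 1 * 1 by apply: ler_pM.
  rewrite expr2; move: h3; rewrite mul1r -!mulrA [enorm x * (k * _)]mulrCA //.
exists (fun i => c i * (1 + dotv y (u i)) / k); split; [|split].
- move=> i; apply: divr_ge0; last exact: ltW.
  apply: mulr_ge0; first exact: ltW (hc i).
  have := dotv_ge0 (y + u i).
  rewrite !dotvDl ![dotv _ (y + _)]dotvC !dotvDl [dotv (u i) y]dotvC.
  have Huu : dotv (u i) (u i) <= 1.
    have := hB i; rewrite /cball => Hu; rewrite -enorm_sq.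
    have := enorm_ge0 (u i); nra.
  lra.
- rewrite -mulr_suml.
  have -> : \sum_i c i * (1 + dotv y (u i)) = \sum_i c i + \sum_i c i * dotv (u i) y.
    rewrite -big_split; apply: eq_bigr => i _ /=; rewrite dotvC; lra.
  have -> : \sum_i c i * dotv (u i) y = 0.
    transitivity (dotv (\sum_i c i *: u i) y); last by rewrite h0 dotv0l.
    by rewrite dotv_suml; apply: eq_bigr => i _; rewrite dotvZl.
  by rewrite addr0 Hsum mulfV // lt0r_neq0.
- have Hy : y *m \sum_i c i *: tensor (u i) = y by rewrite hT mulmx1.
  rewrite mulmx_sumr in Hy.
  have -> : \sum_i (c i * (1 + dotv y (u i)) / k) *: u i
      = k^-1 *: (\sum_i c i *: u i + \sum_i y *m (c i *: tensor (u i))).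
    rewrite -big_split scaler_sumr; apply: eq_bigr => i _ /=.
    rewrite -scalemxAr tensor_mul scalerA -scalerDl scalerA; congr (_ *: _).
    by rewrite mulrC mulrDr mulr1.
  by rewrite Hy h0 add0r /y scalerA mulVf ?scale1r // lt0r_neq0.
Qed.
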